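(* (1) If $j\in\mathbb Z$ and $p,p'\in X_j$ are distinct points with $\pi_j(p)=\pi_j(p')$, then there is a vertical edge path in the $1$-skeleton of $X_j^{(1)}$ of combinatorial length at most $2$ containing $p$ and $p'$. (2) If $\sigma,\sigma'$ are $2$-cells of $X_j$ with $\pi_j(\sigma)\cap\pi_j(\sigma')\ne\emptyset$, then $\sigma\cap\sigma'\ne\emptyset$. (3) If $j\le j'$ are integers, $\hat\sigma$ is a $2$-cell of $Y_j$ and $\hat\sigma'$ a $2$-cell of $Y_{j'}$, and $\hat\pi^\infty(\hat\sigma)\cap\hat\pi^\infty(\hat\sigma')\ne\emptyset$, then $\hat\pi^{j'}(\hat\sigma)\cap\hat\pi^{j'}(\hat\sigma')\ne\emptyset$.
   Context: Standing construction ($n=2$). Fix an integer $L\ge100$, $m=4$, $m_v=3L$. For $j\in\mathbb Z$, $Y_j$ is the cell complex on $\mathbb R^2$ given by the tiling by rectangles $[am^{-j},(a+1)m^{-j}]\times[bm_v^{-j},(b+1)m_v^{-j}]$, $a,b\in\mathbb Z$; a $1$-cell of $Y_j$ is horizontal if it is a translate of $[0,m^{-j}]\times\{0\}$ and vertical if it is a translate of $\{0\}\times[0,m_v^{-j}]$. Let $\Phi(x,y)=(m^{-1}x,m_v^{-1}y)$. For $k,\ell\in\mathbb Z$, $i\in\{1,2,3\}$, let $a_{k,\ell,i}=\{k+\tfrac i4\}\times[(3\ell+i-1)m_v^{-1},(3\ell+i)m_v^{-1}]$. $\mathcal R$ is the equivalence relation on $\mathbb R^2$ generated by $p\sim p+(0,m_v^{-1})$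 for $p\in a_{k,\ell,i}$. $\Phi^j_*\mathcal R=\{(\Phi^jp,\Phi^jq):(p,q)\in\mathcal R\}$; $\mathcal R_j$ is generated by $\Phi^i_*\mathcal R$, $i<j$; $\mathcal R_\infty$ by all $\Phi^i_*\mathcal R$, $i\in\mathbb Z$. For $j\in\mathbb Z\cup\{\infty\}$, $X_j=\mathbb R^2/\mathcal R_j$, $\hat\pi^j$ the quotient map, $\pi_i^j:X_i\to X_j$ ($i\le j$) induced maps, $\pi_j=\pi_j^{j+1}$. $X_j$ carries the CW structure whose open cells are the images under $\hat\pi^j$ of open cells of $Y_j$; $X_j^{(k)}$ is the subdivision whose cells are images of cells of $Y_{j+k}$, and a $1$-cell of $X_j^{(k)}$ is vertical (horizontal) if it is the image of a vertical (horizontal) $1$-cell of $Y_{j+k}$. *)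

(* Defs.v *)
From Stdlib Require Import Reals ZArith List Relations Relation_Operators.
Open Scope R_scope.

Definition pt := (R * R)%type.

Definition m : R := 4.
Definition mv (L : nat) : R := 3 * INR L.

Definition Phi_pow (L : nat) (j : Z) (p : pt) : pt :=
  (powerRZ m (- j) * fst p, powerRZ (mv L) (- j) * snd p).

Definition in_a (L : nat) (k l : Z) (i : nat) (p : pt) : Prop :=
  (1 <= i <= 3)%nat /\
  fst p = IZR k + INR i / 4 /\
  (3 * IZR l + INR i - 1) / mv L <= snd p <= (3 * IZR l + INR i) / mv L.

Definition R0 (L : nat) (p q : pt) : Prop :=
  (exists k l i, in_a L k l i p) /\ q = (fst p, snd p + / mv L).

Definition Rel (L : nat) : relation pt := clos_refl_sym_trans pt (R0 L).

Definition PhiRel (L : nat) (j : Z) (P Q : pt) : Prop :=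
  exists p q, Rel L p q /\ P = Phi_pow L j p /\ Q = Phi_pow L j q.

Definition Rj (L : nat) (j : Z) : relation pt :=
  clos_refl_sym_trans pt (fun P Q => exists i : Z, (i < j)%Z /\ PhiRel L i P Q).

Definition Rinf (L : nat) : relation pt :=
  clos_refl_sym_trans pt (fun P Q => exists i : Z, PhiRel L i P Q).

(* closed 2-cell (a,b) of Y_j *)
Definition cell2 (L : nat) (j a b : Z) (p : pt) : Prop :=
  IZR a * powerRZ m (- j) <= fst p <= (IZR a + 1) * powerRZ m (- j) /\
  IZR b * powerRZ (mv L) (- j) <= snd p <= (IZR b + 1) * powerRZ (mv L) (- j).

Definition vcell (L : nat) (j a b : Z) (p : pt) : Prop :=
  fst p = IZR a * powerRZ m (- j) /\
  IZR b * powerRZ (mv L) (- j) <= snd p <= (IZR b + 1) * powerRZ (mv L) (- j).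

Definition vcell_lo (L : nat) (j a b : Z) : pt :=
  (IZR a * powerRZ m (- j), IZR b * powerRZ (mv L) (- j)).
Definition vcell_hi (L : nat) (j a b : Z) : pt :=
  (IZR a * powerRZ m (- j), (IZR b + 1) * powerRZ (mv L) (- j)).

(* An oriented vertical edge of X_j^{(1)}: the image of the vertical 1-cell
   (a,b) of Y_{j+1}; the boolean gives its orientation. *)
Definition vedge := (Z * Z * bool)%type.

Definition ve_start (L : nat) (j : Z) (e : vedge) : pt :=
  let '(a, b, o) := e in
  if o then vcell_lo L (j + 1) a b else vcell_hi L (j + 1) a b.
Definition ve_end (L : nat) (j : Z) (e : vedge) : pt :=
  let '(a, b, o) := e in
  if o then vcell_hi L (j + 1) a b else vcell_lo L (j + 1) a b.

(* consecutive edges share a vertex in X_j (i.e. modulo R_j) *)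
Fixpoint vpath_chain (L : nat) (j : Z) (es : list vedge) : Prop :=
  match es with
  | e1 :: ((e2 :: _) as rest) =>
      Rj L j (ve_end L j e1) (ve_start L j e2) /\ vpath_chain L j rest
  | _ => True
  end.

Definition on_vpath (L : nat) (j : Z) (es : list vedge) (P : pt) : Prop :=
  exists e, In e es /\
    let '(a, b, _) := e in exists q, vcell L (j + 1) a b q /\ Rj L j q P.

(* Main.v *)
Require Import Defs.
From Stdlib Require Import Reals ZArith List Relations Relation_Operators Lra Lia.
Open Scope R_scope.
Import ListNotations.

Lemma powZ (z d : Z) : (0 <= d)%Z -> powerRZ (IZR z) d = IZR (z ^ d).
Proof. intros H. rewrite <- (Z2Nat.id d H), <- pow_powerRZ, pow_IZR. reflexivity. Qed.

Lemma mvZ L : mv L = IZR (3 * Z.of_nat L).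
Proof. unfold mv. rewrite mult_IZR, <- INR_IZR_INZ. reflexivity. Qed.

Lemma mv_pos L : (100 <= L)%nat -> 300 <= mv L.
Proof. intros H. unfold mv. apply le_INR in H. simpl in H. lra. Qed.

Lemma m4 : m = IZR 4. Proof. reflexivity. Qed.

Definition scale (j : Z) (X : R) := exists k (c : nat), (1 <= c <= 3)%nat /\
  X = powerRZ m (- j) * (IZR k + INR c / 4).

Lemma scale_lt i i' X : (i < i')%Z -> scale i X -> scale i' X -> False.
Proof.
  intros Hlt [k [c [Hc HX]]] [k' [c' [Hc' HX']]].
  assert (Hs : powerRZ m (- i) = powerRZ m (i' - i) * powerRZ m (- i')).
  { rewrite <- powerRZ_add by (unfold m; lra). f_equal. lia. }
  rewrite Hs, m4, powZ in HX by lia. rewrite m4 in HX'.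
  set (N := (4 ^ (i' - i))%Z) in *.
  assert (Hp : 0 < powerRZ (IZR 4) (- i')) by (apply powerRZ_lt; lra).
  assert (E : IZR N * (IZR k + INR c / 4) = IZR k' + INR c' / 4).
  { apply (Rmult_eq_reg_l (powerRZ (IZR 4) (- i'))); [|lra].
    transitivity (IZR N * powerRZ (IZR 4) (- i') * (IZR k + INR c / 4)); [ring|].
    rewrite <- HX, HX'. reflexivity. }
  assert (E2 : IZR (N * (4 * k + Z.of_nat c)) = IZR (4 * k' + Z.of_nat c')).
  { rewrite !mult_IZR, !plus_IZR, !mult_IZR, <- !INR_IZR_INZ.
    replace (IZR N * (IZR 4 * IZR k + INR c)) with (4 * (IZR N * (IZR k + INR c / 4))) by (simpl; field).
    rewrite E. simpl. field. }
  apply eq_IZR in E2.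
  assert (HN : N = (4 * 4 ^ (i' - i - 1))%Z).
  { unfold N. rewrite <- Z.pow_succ_r by lia. f_equal. lia. }
  rewrite HN in E2. set (T := (4 ^ (i' - i - 1))%Z) in *.
  assert (E3 : (4 * (T * (4 * k + Z.of_nat c)) = 4 * k' + Z.of_nat c')%Z) by lia.
  lia.
Qed.

Lemma scale_uniq i i' X : scale i X -> scale i' X -> i = i'.
Proof.
  intros H H'. destruct (Z.lt_trichotomy i i') as [h|[h|h]]; auto.
  - exfalso; eapply scale_lt; eauto.
  - exfalso; eapply scale_lt; eauto.
Qed.
Definition RI L (p q : pt) := fst p = fst q /\ (p = q \/ exists k (c : nat) l,
  (1 <= c <= 3)%nat /\ fst p = IZR k + INR c / 4 /\
  IZR (3 * l + Z.of_nat c - 1) <= snd p * mv L <= IZR (3 * l + Z.of_nat c - 1) + 2 /\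
  IZR (3 * l + Z.of_nat c - 1) <= snd q * mv L <= IZR (3 * l + Z.of_nat c - 1) + 2).

Lemma div_le_l A M y : 0 < M -> A / M <= y -> A <= y * M.
Proof. intros HM H. replace A with (A / M * M) by (field; lra).
  apply Rmult_le_compat_r; lra. Qed.
Lemma div_le_r A M y : 0 < M -> y <= A / M -> y * M <= A.
Proof. intros HM H. replace A with (A / M * M) by (field; lra).
  apply Rmult_le_compat_r; lra. Qed.

Lemma frac_uniq k c k' c' : (1 <= c <= 3)%nat -> (1 <= c' <= 3)%nat ->
  IZR k + INR c / 4 = IZR k' + INR c' / 4 -> c = c'.
Proof.
  intros Hc Hc' E.
  assert (E2 : IZR (4 * k + Z.of_nat c) = IZR (4 * k' + Z.of_nat c')).
  { rewrite !plus_IZR, !mult_IZR, <- !INR_IZR_INZ. lra. }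
  apply eq_IZR in E2. lia.
Qed.

Lemma Rel_RI L p q : (100 <= L)%nat -> Rel L p q -> RI L p q.
Proof.
  intros HL H. pose proof (mv_pos L HL) as Hmv.
  induction H as [p q H0| p | p q H IH | p q r H1 IH1 H2 IH2].
  - destruct H0 as [[k [l [i [Hi [Hx Hy]]]]] Hq]. subst q. split; [reflexivity|].
    right. exists k, i, l. split; [exact Hi|]. split; [exact Hx|].
    assert (En : IZR (3 * l + Z.of_nat i - 1) = 3 * IZR l + INR i - 1).
    { rewrite minus_IZR, plus_IZR, mult_IZR, <- INR_IZR_INZ. reflexivity. }
    rewrite En. destruct Hy as [Hy1 Hy2].
    apply div_le_l in Hy1; [|lra]. apply div_le_r in Hy2; [|lra].
    simpl. replace ((snd p + / mv L) * mv L) with (snd p * mv L + 1) by (field; lra).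
    lra.
  - split; auto.
  - destruct IH as [Hx [E|[k [c [l [Hc [Hk [B1 B2]]]]]]]].
    + split; auto.
    + split; auto. right. exists k, c, l. rewrite <- Hx. auto.
  - destruct IH1 as [Hx1 [E1|[k [c [l [Hc [Hk [B1 B2]]]]]]]];
    destruct IH2 as [Hx2 [E2|[k' [c' [l' [Hc' [Hk' [C1 C2]]]]]]]].
    + subst; split; auto.
    + subst; split; auto. right. exists k', c', l'. auto.
    + subst; split; auto. right. exists k, c, l. auto.
    + split; [congruence|]. right. exists k, c, l. split; auto. split; auto.
      rewrite Hx1 in Hk. rewrite Hk in Hk'. pose proof (frac_uniq _ _ _ _ Hc Hc' Hk'); subst c'.
      set (n := (3 * l + Z.of_nat c - 1)%Z) in *. set (n' := (3 * l' + Z.of_nat c - 1)%Z) in *.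
      assert (n <= n' + 2)%Z. { apply le_IZR. rewrite plus_IZR. lra. }
      assert (n' <= n + 2)%Z. { apply le_IZR. rewrite plus_IZR. lra. }
      assert (n = n') by (unfold n, n' in *; lia). rewrite <- H3 in C2. split; auto.
Qed.
Lemma Phi_inj L j p q : (100 <= L)%nat -> Phi_pow L j p = Phi_pow L j q -> p = q.
Proof.
  intros HL E. pose proof (mv_pos L HL). unfold Phi_pow in E. injection E as E1 E2.
  assert (h1 : powerRZ m (- j) <> 0) by (apply powerRZ_NOR; unfold m; lra).
  assert (h2 : powerRZ (mv L) (- j) <> 0) by (apply powerRZ_NOR; lra).
  apply Rmult_eq_reg_l in E1; auto. apply Rmult_eq_reg_l in E2; auto.
  destruct p, q; simpl in *; subst; auto.
Qed.

Lemma PhiRel_sym L i P Q : PhiRel L i P Q -> PhiRel L i Q P.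
Proof. intros [p [q [H [E1 E2]]]]. exists q, p. split; auto. apply rst_sym; auto. Qed.

Lemma PhiRel_trans L i P Q R : (100 <= L)%nat -> PhiRel L i P Q -> PhiRel L i Q R -> PhiRel L i P R.
Proof.
  intros HL [p [q [H [E1 E2]]]] [q' [r [H' [E1' E2']]]].
  assert (q = q') by (apply (Phi_inj L i); auto; congruence). subst q'.
  exists p, r. split; auto. eapply rst_trans; eauto.
Qed.

Lemma PhiRel_refl L i P : (100 <= L)%nat -> PhiRel L i P P.
Proof.
  intros HL. pose proof (mv_pos L HL).
  assert (h1 : powerRZ m (- i) <> 0) by (apply powerRZ_NOR; unfold m; lra).
  assert (h2 : powerRZ (mv L) (- i) <> 0) by (apply powerRZ_NOR; lra).
  exists (fst P / powerRZ m (- i), snd P / powerRZ (mv L) (- i)),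
         (fst P / powerRZ m (- i), snd P / powerRZ (mv L) (- i)).
  split; [apply rst_refl|]. unfold Phi_pow; simpl.
  destruct P as [x y]; simpl. split; f_equal; field; auto.
Qed.

Lemma PRI L i P Q : (100 <= L)%nat -> PhiRel L i P Q ->
  fst P = fst Q /\ Rabs (snd P - snd Q) <= 2 * powerRZ (mv L) (- i) / mv L /\
  (P = Q \/ scale i (fst P)).
Proof.
  intros HL [p [q [H [E1 E2]]]]. pose proof (mv_pos L HL).
  assert (hp : 0 < powerRZ (mv L) (- i)) by (apply powerRZ_lt; lra).
  apply Rel_RI in H; auto. destruct H as [Hx [E|[k [c [l [Hc [Hk [B1 B2]]]]]]]].
  - subst. split; auto. split.
    + replace (snd (Phi_pow L i q) - snd (Phi_pow L i q)) with 0 by ring.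
      rewrite Rabs_R0. apply Rmult_le_pos; [lra| left; apply Rinv_0_lt_compat; lra].
    + left; auto.
  - subst. unfold Phi_pow; simpl. split; [rewrite Hx; auto|]. split.
    + replace (powerRZ (mv L) (- i) * snd p - powerRZ (mv L) (- i) * snd q)
        with (powerRZ (mv L) (- i) * (snd p - snd q)) by ring.
      rewrite Rabs_mult, (Rabs_right (powerRZ _ _)) by lra.
      assert (Rabs (snd p - snd q) <= 2 / mv L).
      { apply Rabs_le. split.
        - apply (Rmult_le_reg_r (mv L)); [lra|]. unfold Rdiv.
          replace (- (2 * / mv L) * mv L) with (-2) by (field; lra). lra.
        - apply (Rmult_le_reg_r (mv L)); [lra|]. unfold Rdiv.
          replace (2 * / mv L * mv L) with 2 by (field; lra). lra. }
      replace (2 * powerRZ (mv L) (- i) / mv L) with (powerRZ (mv L) (- i) * (2 / mv L)) by (field; lra).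
      apply Rmult_le_compat_l; lra.
    + right. exists k, c. split; auto. rewrite Hk. reflexivity.
Qed.

Definition RS L (S : Z -> Prop) (P Q : pt) := fst P = fst Q /\
  (P = Q \/ exists i, S i /\ scale i (fst P) /\ PhiRel L i P Q).

Lemma clos_RS L (Rg : relation pt) (S : Z -> Prop) P Q : (100 <= L)%nat ->
  (forall P Q, Rg P Q -> exists i, S i /\ PhiRel L i P Q) ->
  clos_refl_sym_trans pt Rg P Q -> RS L S P Q.
Proof.
  intros HL HR H. induction H as [P Q H| P | P Q H IH | P Q R H1 IH1 H2 IH2].
  - destruct (HR _ _ H) as [i [Si Hi]]. destruct (PRI L i P Q HL Hi) as [Hx [_ [E|Sc]]].
    + split; auto.
    + split; auto. right. exists i. auto.
  - split; auto.
  - destruct IH as [Hx [E|[i [Si [Sc Hi]]]]].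
    + split; auto.
    + split; auto. right. exists i. rewrite <- Hx. split; auto. split; auto.
      apply PhiRel_sym; auto.
  - destruct IH1 as [Hx1 [E1|[i [Si [Sc Hi]]]]];
    destruct IH2 as [Hx2 [E2|[i' [Si' [Sc' Hi']]]]].
    + subst; split; auto.
    + subst; split; auto. right. exists i'. auto.
    + subst; split; auto. right. exists i. auto.
    + split; [congruence|]. right. rewrite <- Hx1 in Sc'.
      pose proof (scale_uniq _ _ _ Sc Sc'); subst i'.
      exists i. split; auto. split; auto. eapply PhiRel_trans; eauto.
Qed.

Lemma Rj_RS L j P Q : (100 <= L)%nat -> Rj L j P Q -> RS L (fun i => (i < j)%Z) P Q.
Proof. intros HL H. eapply clos_RS; [exact HL| |exact H]. intros P0 Q0 Hh; exact Hh. Qed.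

Lemma Rinf_RS L P Q : (100 <= L)%nat -> Rinf L P Q -> RS L (fun _ => True) P Q.
Proof. intros HL H. eapply clos_RS; [exact HL| |exact H]. intros P0 Q0 [i Hi]. exists i; auto. Qed.
Lemma cells_meet L j j' a b a' b' x y : (100 <= L)%nat -> (j <= j')%Z ->
  cell2 L j a b x -> cell2 L j' a' b' y -> fst x = fst y ->
  Rabs (snd x - snd y) < powerRZ (mv L) (- j') ->
  exists z, cell2 L j a b z /\ cell2 L j' a' b' z.
Proof.
  intros HL Hj [[X1 X2] [Y1 Y2]] [[X1' X2'] [Y1' Y2']] Hx Hy.
  pose proof (mv_pos L HL) as Hmv.
  set (h := powerRZ (mv L) (- j')) in *.
  assert (hp : 0 < h) by (apply powerRZ_lt; lra).
  set (Nz := ((3 * Z.of_nat L) ^ (j' - j))%Z).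
  assert (HH : powerRZ (mv L) (- j) = IZR Nz * h).
  { unfold h, Nz. rewrite <- powZ by lia. rewrite <- mvZ, <- powerRZ_add by lra. f_equal. lia. }
  rewrite HH in *. set (N := IZR Nz) in *.
  assert (Np : 0 < N).
  { unfold N. apply IZR_lt. unfold Nz. apply Z.pow_pos_nonneg; lia. }
  apply Rabs_def2 in Hy. destruct Hy as [Hy1 Hy2].
  assert (A1 : IZR b * N <= IZR b' + 1).
  { assert (IZR b * N < IZR b' + 2).
    { apply (Rmult_lt_reg_r h); [exact hp|]. nra. }
    assert (IZR (b * Nz) < IZR (b' + 2)) by (rewrite mult_IZR, plus_IZR; exact H).
    apply lt_IZR in H0. assert (b * Nz <= b' + 1)%Z by lia.
    apply IZR_le in H1. rewrite mult_IZR, plus_IZR in H1. exact H1. }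
  assert (A2 : IZR b' <= (IZR b + 1) * N).
  { assert (IZR b' < (IZR b + 1) * N + 1).
    { apply (Rmult_lt_reg_r h); [exact hp|]. nra. }
    assert (IZR b' < IZR ((b + 1) * Nz + 1)) by (rewrite plus_IZR, mult_IZR, plus_IZR; exact H).
    apply lt_IZR in H0. assert (b' <= (b + 1) * Nz)%Z by lia.
    apply IZR_le in H1. rewrite mult_IZR, plus_IZR in H1. exact H1. }
  exists (fst x, Rmax (IZR b * (N * h)) (IZR b' * h)). unfold cell2; rewrite HH; fold h; simpl.
  split; (split; [simpl; split; lra|split; simpl]).
  - apply Rmax_l.
  - apply Rmax_lub.
    + apply Rmult_le_compat_r; [nra|lra].
    + rewrite <- Rmult_assoc. apply Rmult_le_compat_r; lra.
  - apply Rmax_r.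
  - apply Rmax_lub.
    + rewrite <- Rmult_assoc. apply Rmult_le_compat_r; lra.
    + apply Rmult_le_compat_r; lra.
Qed.
Lemma pw1 x j : x <> 0 -> powerRZ x (- (j + 1)) = powerRZ x (- j) / x.
Proof. intros H. replace (- (j + 1))%Z with (- j + -1)%Z by lia.
  rewrite powerRZ_add by auto. simpl. field. auto. Qed.

Lemma pow_mono L i j' : (100 <= L)%nat -> (j' <= i)%Z ->
  powerRZ (mv L) (- i) <= powerRZ (mv L) (- j').
Proof.
  intros HL H. pose proof (mv_pos L HL).
  assert (E : powerRZ (mv L) (- j') = powerRZ (mv L) (i - j') * powerRZ (mv L) (- i)).
  { rewrite <- powerRZ_add by lra. f_equal. lia. }
  rewrite E, mvZ, (powZ _ (i - j')) by lia. rewrite <- mvZ.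
  assert (1 <= IZR ((3 * Z.of_nat L) ^ (i - j'))).
  { apply IZR_le. assert (0 < (3 * Z.of_nat L) ^ (i - j'))%Z by (apply Z.pow_pos_nonneg; lia). lia. }
  assert (0 < powerRZ (mv L) (- i)) by (apply powerRZ_lt; lra). nra.
Qed.

Lemma onv L j p k c l : (100 <= L)%nat -> (1 <= c <= 3)%nat -> fst p = IZR k + INR c / 4 ->
  IZR (3 * l + Z.of_nat c - 1) <= snd p * mv L <= IZR (3 * l + Z.of_nat c - 1) + 2 ->
  on_vpath L j [(4 * k + Z.of_nat c, 3 * l + Z.of_nat c - 1, true);
                (4 * k + Z.of_nat c, 3 * l + Z.of_nat c - 1 + 1, true)]%Z (Phi_pow L j p).
Proof.
  intros HL Hc Hk [B1 B2]. pose proof (mv_pos L HL) as Hmv.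
  set (n := (3 * l + Z.of_nat c - 1)%Z) in *. set (a := (4 * k + Z.of_nat c)%Z).
  assert (Hm : m <> 0) by (unfold m; lra).
  assert (Hmp : 0 < powerRZ m (- j)) by (apply powerRZ_lt; unfold m; lra).
  assert (Hvp : 0 < powerRZ (mv L) (- j)) by (apply powerRZ_lt; lra).
  assert (FX : fst (Phi_pow L j p) = IZR a * powerRZ m (- (j + 1))).
  { unfold Phi_pow; simpl. rewrite pw1 by auto. rewrite Hk. unfold a.
    rewrite plus_IZR, mult_IZR, <- INR_IZR_INZ. unfold m. field. }
  assert (SY : snd (Phi_pow L j p) = (powerRZ (mv L) (- j) / mv L) * (snd p * mv L)).
  { unfold Phi_pow; simpl. field. lra. }
  set (C := powerRZ (mv L) (- j) / mv L) in *.
  assert (Cp : 0 < C) by (unfold C; apply Rdiv_lt_0_compat; lra).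
  set (Y := snd p * mv L) in *.
  destruct (Rle_dec Y (IZR n + 1)).
  - exists (a, n, true). split; [left; reflexivity|].
    exists (Phi_pow L j p). split; [|apply rst_refl].
    unfold vcell. rewrite (pw1 (mv L)) by lra. fold C. split; [rewrite FX, pw1 by auto; reflexivity|]. rewrite SY. split; nra.
  - exists (a, (n + 1)%Z, true). split; [right; left; reflexivity|].
    exists (Phi_pow L j p). split; [|apply rst_refl].
    unfold vcell. rewrite (pw1 (mv L)) by lra. fold C. split; [rewrite FX, pw1 by auto; reflexivity|]. rewrite SY, plus_IZR. split; nra.
Qed.
Theorem mainTheorem4 (L : nat) (HL : (100 <= L)%nat) :
  (* (1) *)
  (forall (j : Z) (P P' : pt),
      ~ Rj L j P P' -> Rj L (j + 1) P P' ->
      exists es : list vedge,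
        (length es <= 2)%nat /\ vpath_chain L j es /\
        on_vpath L j es P /\ on_vpath L j es P') /\
  (* (2) *)
  (forall (j a b a' b' : Z),
      (exists x y, cell2 L j a b x /\ cell2 L j a' b' y /\ Rj L (j + 1) x y) ->
      exists x y, cell2 L j a b x /\ cell2 L j a' b' y /\ Rj L j x y) /\
  (* (3) *)
  (forall (j j' a b a' b' : Z), (j <= j')%Z ->
      (exists x y, cell2 L j a b x /\ cell2 L j' a' b' y /\ Rinf L x y) ->
      exists x y, cell2 L j a b x /\ cell2 L j' a' b' y /\ Rj L j' x y).
Proof.
  pose proof (mv_pos L HL) as Hmv.
  assert (Hbnd : forall i, 2 * powerRZ (mv L) (- i) / mv L < powerRZ (mv L) (- i)).
  { intros i. assert (0 < powerRZ (mv L) (- i)) by (apply powerRZ_lt; lra).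
    apply (Rmult_lt_reg_r (mv L)); [lra|]. unfold Rdiv.
    replace (2 * powerRZ (mv L) (- i) * / mv L * mv L) with (2 * powerRZ (mv L) (- i)) by (field; lra).
    nra. }
  split; [|split].
  - intros j P P' Hn H. apply Rj_RS in H; auto.
    destruct H as [Hx [E|[i [Si [Sc Hi]]]]].
    { exfalso. apply Hn. subst. apply rst_refl. }
    destruct (Z_lt_le_dec i j) as [h|h].
    { exfalso. apply Hn. apply rst_step. exists i. auto. }
    assert (i = j) by lia. subst i.
    destruct Hi as [p [p' [HR [E1 E2]]]]. apply Rel_RI in HR; auto.
    destruct HR as [Hpx [E|[k [c [l [Hc [Hk [B1 B2]]]]]]]].
    { exfalso. apply Hn. subst. apply rst_refl. }
    exists [(4 * k + Z.of_nat c, 3 * l + Z.of_nat c - 1, true);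
            (4 * k + Z.of_nat c, 3 * l + Z.of_nat c - 1 + 1, true)]%Z.
    split; [simpl; lia|]. split.
    + cbn [vpath_chain ve_end ve_start]. split; [|exact I]. unfold vcell_hi, vcell_lo.
      rewrite (plus_IZR (3 * l + Z.of_nat c - 1) 1). apply rst_refl.
    + subst. split; eapply onv; eauto. rewrite <- Hpx; exact Hk.
  - intros j a b a' b' [x [y [Hx [Hy H]]]]. apply Rj_RS in H; auto.
    destruct H as [Hxx [E|[i [Si [Sc Hi]]]]].
    { exists x, y. subst. split; auto. split; auto. apply rst_refl. }
    destruct (Z_lt_le_dec i j) as [h|h].
    { exists x, y. split; auto. split; auto. apply rst_step. exists i. auto. }
    assert (i = j) by lia. subst i.
    destruct (PRI L j x y HL Hi) as [_ [Hb _]].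
    destruct (cells_meet L j j a b a' b' x y HL (Z.le_refl j) Hx Hy Hxx) as [z [Hz1 Hz2]].
    { specialize (Hbnd j). lra. }
    exists z, z. split; auto. split; auto. apply rst_refl.
  - intros j j' a b a' b' Hj [x [y [Hx [Hy H]]]]. apply Rinf_RS in H; auto.
    destruct H as [Hxx [E|[i [Si [Sc Hi]]]]].
    { exists x, y. subst. split; auto. split; auto. apply rst_refl. }
    destruct (Z_lt_le_dec i j') as [h|h].
    { exists x, y. split; auto. split; auto. apply rst_step. exists i. auto. }
    destruct (PRI L i x y HL Hi) as [_ [Hb _]].
    destruct (cells_meet L j j' a b a' b' x y HL Hj Hx Hy Hxx) as [z [Hz1 Hz2]].
    { specialize (Hbnd i). pose proof (pow_mono L i j' HL h). lra. }
    exists z, z. split; auto. split; auto. apply rst_refl.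
Qed.
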